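(* Let $A,B,l$ be positive integers and let $\mathcal A\subset\mathbb R^2$ be a set such that $a+b=l-1$ for all $(a,b)\in\mathcal A$. Then there exist $\lambda_1,\lambda_2\in\mathbb R$ with \[a\lambda_1+b\lambda_2\ge1\ \text{ for all }(a,b)\in\mathcal A\qquad\text{and}\qquad \lambda_1A+\lambda_2B<0\] if and only if either \[\inf_{(a,b)\in\mathcal A}a>\frac{A(l-1)}{A+B}\qquad\text{or}\qquad\inf_{(a,b)\in\mathcal A}b>\frac{B(l-1)}{A+B}.\] *)

(* Defs.v *)
From HB Require Import structures.
From mathcomp Require Import all_boot all_order all_algebra.
From mathcomp Require Import all_classical all_reals.
From mathcomp Require Export ereal.
Set Implicit Arguments. Unset Strict Implicit. Unset Printing Implicit Defensive.

(* Main.v *)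
Require Import Defs.
From HB Require Import structures.
From mathcomp Require Import all_boot all_order all_algebra.
From mathcomp Require Import all_classical all_reals ereal.
From mathcomp Require Import ring lra.
Import Order.TTheory GRing.Theory Num.Theory.
Local Open Scope classical_set_scope.
Local Open Scope ring_scope.

Lemma inf_gt (R : realType) (S : set (R * R)) (f : R * R -> R) (x m : R) :
  x < m -> (forall p, S p -> m <= f p) ->
  (x%:E < ereal_inf [set (f p)%:E | p in S])%E.
Proof.
move=> xm H; apply: (@lt_le_trans _ _ m%:E); first by rewrite lte_fin.
by apply/ereal_infP => y [p Sp <-]; rewrite lee_fin; apply: H.
Qed.

Lemma inf_lt (R : realType) (S : set (R * R)) (f : R * R -> R) (x : R) :
  (x%:E < ereal_inf [set (f p)%:E | p in S])%E ->
  exists m, x < m /\ (forall p, S p -> m <= f p).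
Proof.
have lb p : S p -> (ereal_inf [set (f p)%:E | p in S] <= (f p)%:E)%E.
  by move=> Sp; apply: ereal_inf_lbound; exists p.
case E: ereal_inf => [r| |] H.
- exists r; split; first by rewrite -lte_fin.
  by move=> p Sp; rewrite -lee_fin -E; apply: lb.
- exists (x + 1); split; first lra.
  by move=> p Sp; have := lb p Sp; rewrite E leye_eq.
- by [].
Qed.

(* The infima are taken in the extended reals (inf of the empty set = +oo). *)
Theorem lemma4p9 (R : realType) (A B l : nat)
  (hA : (0 < A)%N) (hB : (0 < B)%N) (hl : (0 < l)%N)
  (S : set (R * R))
  (hS : forall p, S p -> p.1 + p.2 = l%:R - 1) :
  (exists l1 l2 : R,
      (forall p, S p -> 1 <= p.1 * l1 + p.2 * l2) /\
      l1 * A%:R + l2 * B%:R < 0) <->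
  ((((A%:R * (l%:R - 1)) / (A%:R + B%:R))%:E < ereal_inf [set (p.1)%:E | p in S])%E \/
   (((B%:R * (l%:R - 1)) / (A%:R + B%:R))%:E < ereal_inf [set (p.2)%:E | p in S])%E).
Proof.
have a0 : 0 < A%:R :> R by rewrite ltr0n.
have b0 : 0 < B%:R :> R by rewrite ltr0n.
have L0 : 0 <= l%:R - 1 :> R by rewrite subr_ge0 ler1n.
set a := A%:R : R; set b := B%:R : R; set L := l%:R - 1 : R.
have s0 : 0 < a + b by lra.
split.
- move=> [l1 [l2 [H1 H2]]].
  have [d0|d0|d0] := ltgtP (l1 - l2) 0.
  + right; set e := l2 - l1.
    have e0 : 0 < e by rewrite /e; lra.
    apply: (@inf_gt _ _ _ _ ((1 - L * l1) / e)).
      rewrite ltr_pdivlMr // mulrAC ltr_pdivrMr //.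
      have : 0 <= L * ((l1 * a + l2 * b) * -1) by apply: mulr_ge0 => //; nra.
      rewrite /e; nra.
    move=> p Sp; rewrite ler_pdivrMr //.
    have := H1 p Sp; have := hS p Sp; rewrite -/L /e => hp.
    have -> : p.1 = L - p.2 by lra.
    nra.
  + left; set e := l1 - l2.
    have e0 : 0 < e by rewrite /e; lra.
    apply: (@inf_gt _ _ _ _ ((1 - L * l2) / e)).
      rewrite ltr_pdivlMr // mulrAC ltr_pdivrMr //.
      have : 0 <= L * ((l1 * a + l2 * b) * -1) by apply: mulr_ge0 => //; nra.
      rewrite /e; nra.
    move=> p Sp; rewrite ler_pdivrMr //.
    have := H1 p Sp; have := hS p Sp; rewrite -/L /e => hp.
    have -> : p.2 = L - p.1 by lra.
    nra.
  + left; apply: (@inf_gt _ _ _ _ (a * L / (a + b) + 1)); first lra.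
    move=> p Sp; exfalso.
    have := H1 p Sp; have := hS p Sp; rewrite -/L => hp.
    have -> : l1 = l2 by lra.
    have l20 : l2 < 0 by nra.
    have : 0 <= L * (- l2) by apply: mulr_ge0 => //; lra.
    nra.
- case=> /inf_lt [m [hm Hm]].
  + set g := m - a * L / (a + b).
    have g0 : 0 < g by rewrite /g; lra.
    set d := (1 + L) / g.
    have dg : d * g = 1 + L by rewrite /d mulrVK // unitfE gt_eqF.
    have d0 : 0 < d by apply: divr_gt0 => //; rewrite addrC; apply: ltr_wpDl L0 ltr01.
    set c := a / (a + b).
    have cE : c * (a + b) = a by rewrite /c mulrVK // unitfE gt_eqF.
    exists (d * (1 - c) - 1), (- (d * c) - 1); split.
      move=> p Sp; have := hS p Sp; rewrite -/L => hp.
      have -> : p.2 = L - p.1 by lra.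
      have := Hm p Sp => hm1.
      have hmd : m * d <= p.1 * d by rewrite ler_pM2r.
      have : g = m - L * c by rewrite /g /c; field; lra.
      nra.
    nra.
  + set g := m - b * L / (a + b).
    have g0 : 0 < g by rewrite /g; lra.
    set d := (1 + L) / g.
    have dg : d * g = 1 + L by rewrite /d mulrVK // unitfE gt_eqF.
    have d0 : 0 < d by apply: divr_gt0 => //; rewrite addrC; apply: ltr_wpDl L0 ltr01.
    set c := a / (a + b).
    have cE : c * (a + b) = a by rewrite /c mulrVK // unitfE gt_eqF.
    exists (- (d * (1 - c)) - 1), (d * c - 1); split.
      move=> p Sp; have := hS p Sp; rewrite -/L => hp.
      have -> : p.1 = L - p.2 by lra.
      have := Hm p Sp => hm1.
      have hmd : m * d <= p.2 * d by rewrite ler_pM2r.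
      have : g = m - L * (1 - c) by rewrite /g /c; field; lra.
      nra.
    nra.
Qed.
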